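(* For $i=1,\dots,M$, let $\mathcal Q_i$ be a symmetric positive semidefinite matrix and $C_i$ a matrix with full row rank (as defined in the context), let $Z_i$ be a matrix whose columns form an orthonormal basis of the null space of $C_i$, and assume $Z_i^\top\mathcal Q_iZ_i$ is positive definite and $\beta\in(0,1)$. For $\rho>0$ define \[ \Theta_i(\rho)=\Big\|\big(Z_i^\top(\tfrac1\rho\mathcal Q_i+I)Z_i\big)^{-1}-\tfrac12 I\Big\|_2 . \] Then the penalty parameters that optimize the worst-case convergence rate of Algorithm SE, i.e. that minimize $\|\tilde{\mathcal M}\|_2=\max_i\Theta_i(\rho_i)$ over $\rho_1,\dots,\rho_M>0$, are \[ \rho_i^\star=\sqrt{\operatorname{eig}_{\min}(Z_i^\top\mathcal Q_iZ_i)\,\operatorname{eig}_{\max}(Z_i^\top\mathcal Q_iZ_i)},\qquad i=1,\dots,M, \] and this choice does not depend on $\beta$.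
   Context: Setting: an MPC problem with dynamics $x^{k+1}=Ax^k+Bu^k$, horizon $N$, partitioned into subsystems $i=1,\dots,M$, is written as the stacked problem: minimize $\sum_i(\tfrac12y_i^\top\mathcal Q_iy_i+q_i^\top y_i+K_i)$ s.t. $C_iy_i=c_i$ (subsystem dynamics), $y_i\in\mathcal Y_i$ (convex constraint sets), $Dy=d$ (coupling), where $y_i=[y_i^1;\dots;y_i^N]$, $y_i^k=[u_i^k;w_i^k;x_i^{k+1}]$, $\mathcal Q_i=I_N\otimes\mathrm{diag}(R_i,0,Q_i)$, and $C_iy_i=c_i$ is the linear system $x_i^{k+1}=A_{ii}x_i^k+B_{ii}u_i^k+W_iw_i^k$, $k=1,\dots,N$ (initial state given). Algorithm SE is the ADMM scheme with subsystem penalty parameters $\rho_i>0$ and balancing parameter $\beta\in(0,1]$: (1) $y_i\leftarrow\arg\min_{C_iy_i=c_i}\tfrac12y_i^\top\mathcal Q_iy_i+q_i^\top y_i+\tfrac{\rho_i}2[\beta\|y_i-\zeta_i-\lambda_{\zeta_i}\|^2+(1-\beta)\|y_i-\epsilon_i-\lambda_{\epsilon_i}\|^2]$; (2) $\zeta_i\leftarrow\Pi_{\mathcal Y_i}(y_i-\lambda_{\zeta_i})$; (3) $\epsilon\leftarrow$ the projection of $y-\lambda_\epsilon$ onto $\{D\epsilon=d\}$ in the norm weighted by $(1-\beta)\mathrm{diag}(\rho_iI)$; (4) $\lambda_\zeta\leftarrow\lambda_\zeta-(y-\zeta)$, $\lambda_\epsilon\leftarrow\lambda_\epsilon-(y-\epsilon)$.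 Its worst-case convergence rate bound is governed by $\|\tilde{\mathcal M}\|_2$, where $\tilde{\mathcal M}=\mathrm{diag}_i\big(Z_i^\top\mathcal M_iZ_i-\tfrac12I\big)$ and $\mathcal M_i=Z_i\big(Z_i^\top(\tfrac1{\rho_i}\mathcal Q_i+I)Z_i\big)^{-1}Z_i^\top$; ''optimal'' means minimizing this quantity. $\operatorname{eig}_{\min},\operatorname{eig}_{\max}$ denote smallest and largest eigenvalues; $\|\cdot\|_2$ is the spectral norm. *)

(* Defs.v *)
From HB Require Import structures.
From mathcomp Require Import all_boot all_order all_algebra.
From mathcomp Require Import classical_sets reals.
Set Implicit Arguments. Unset Strict Implicit. Unset Printing Implicit Defensive.
Import Order.TTheory GRing.Theory Num.Theory.
Local Open Scope ring_scope.
Local Open Scope classical_set_scope.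

Section Defs.
Variable R : realType.

Definition vnorm2 n (x : 'cV[R]_n) : R := \sum_(j < n) (x j 0) ^+ 2.

Definition spec_norm m n (A : 'M[R]_(m, n)) : R :=
  sup [set Num.sqrt (vnorm2 (A *m x)) | x in [set x : 'cV[R]_n | vnorm2 x = 1]].

Definition qform n (A : 'M[R]_n) (x : 'cV[R]_n) : R := (x^T *m A *m x) 0 0.

Definition sym_psd n (A : 'M[R]_n) : Prop :=
  A^T = A /\ forall x : 'cV[R]_n, 0 <= qform A x.

Definition pos_def n (A : 'M[R]_n) : Prop :=
  A^T = A /\ forall x : 'cV[R]_n, x != 0 -> 0 < qform A x.

Definition full_row_rank p n (C : 'M[R]_(p, n)) : Prop := \rank C = p.

Definition orth_null_basis p n k (C : 'M[R]_(p, n)) (Z : 'M[R]_(n, k)) : Prop :=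
  [/\ Z^T *m Z = 1%:M, C *m Z = 0 &
      forall v : 'cV[R]_n, C *m v = 0 -> exists w : 'cV[R]_k, v = Z *m w].

Definition eig_min n (A : 'M[R]_n) : R := inf [set a : R | eigenvalue A a].
Definition eig_max n (A : 'M[R]_n) : R := sup [set a : R | eigenvalue A a].

Definition Theta n k (Q : 'M[R]_n) (Z : 'M[R]_(n, k)) (rho : R) : R :=
  spec_norm (invmx (Z^T *m (rho^-1 *: Q + 1%:M) *m Z) - 2^-1 *: 1%:M).

Definition Mtilde_norm (M : nat) (n k : 'I_M -> nat)
  (Q : forall i, 'M[R]_(n i)) (Z : forall i, 'M[R]_(n i, k i)) (rho : 'I_M -> R) : R :=
  \big[Num.max/0]_(i < M) Theta (Q i) (Z i) (rho i).

Definition rho_star n k (Q : 'M[R]_n) (Z : 'M[R]_(n, k)) : R :=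
  Num.sqrt (eig_min (Z^T *m Q *m Z) * eig_max (Z^T *m Q *m Z)).

End Defs.

(* Main.v *)
Require Import Defs.
From HB Require Import structures.
From mathcomp Require Import all_boot all_order all_algebra.
From mathcomp Require Import classical_sets reals.
From mathcomp Require Import complex.
From mathcomp Require Import algebra_tactics.ring algebra_tactics.lra.
Set Implicit Arguments. Unset Strict Implicit. Unset Printing Implicit Defensive.
Import Order.TTheory GRing.Theory Num.Theory.
Local Open Scope ring_scope.
Local Open Scope classical_set_scope.
Section S.
Variable R : realType.
Local Notation toC := (real_complex R).

Lemma entry_diag (C : comNzRingType) k (r : 'rV[C]_k) (d : 'rV[C]_k) (w : 'cV[C]_k) :
  (r *m diag_mx d *m w) 0 0 = \sum_j r 0 j * d 0 j * w j 0.
Proof. by rewrite mxE; apply: eq_bigr => j _; rewrite mul_mx_diag mxE. Qed.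

Lemma spectral_real k (H : 'M[R]_k) : H^T = H ->
  exists x : 'I_k -> R,
   (forall a, eigenvalue H a <-> exists j, a = x j) /\
   (forall al be, (forall j, al <= x j <= be) -> forall y : 'cV[R]_k,
      ((H *m y)^T *m (H *m y)) 0 0 - (al + be) * (y^T *m H *m y) 0 0
        + al * be * (y^T *m y) 0 0 <= 0).
Proof.
move=> Hsym.
set HC := map_mx toC H.
have HCsym : HC^T = HC by rewrite /HC map_trmx Hsym.
have herm : HC \is hermsymmx.
  apply/is_hermitianmxP; rewrite expr0 scale1r HCsym.
  by apply/matrixP => i j; rewrite !mxE /=; apply/esym; exact: conjc_real.
have /orthomx_spectralP eqH := hermitian_normalmx herm.
set P := spectralmx HC in eqH.
set d := spectral_diag HC in eqH.
have Pu : P \is unitarymx by apply: spectral_unitarymx.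
have Punit : P \in unitmx by apply: spectral_unit.
have dreal := hermitian_spectral_diag_real herm.
exists (fun j => complex.Re (d 0 j)).
have dx : forall j, d 0 j = toC (complex.Re (d 0 j)).
  by move=> j; rewrite RRe_real //; apply: (mxOverP dreal).
have eqv : forall a, eigenvalue H a = eigenvalue HC (toC a).
  by move=> a; rewrite -(eigenvalue_map toC).
split.
  move=> a; split.
    rewrite eqv => /eigenvalueP [v vH vn0].
    set w := v *m invmx P.
    have wD : w *m diag_mx d = toC a *: w.
      have := congr1 (mulmx^~ (invmx P)) vH.
      by rewrite /= {1}eqH !mulmxA mulmxK // -scalemxAl.
    have wn0 : w != 0.
      apply: contraNneq vn0 => w0.
      by rewrite -(mulmxKV Punit v) -/w w0 mul0mx.
    clearbody w.
    have [j wj] : exists j, w 0 j != 0.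
      apply/existsP; apply: contraNT wn0; rewrite negb_exists => /forallP w0.
      by apply/eqP/rowP => j; move: (w0 j); rewrite negbK => /eqP ->; rewrite mxE.
    exists j; apply: (@complexI R); rewrite RRe_real; last exact: (mxOverP dreal).
    move/rowP: wD => /(_ j); rewrite mul_mx_diag !mxE mulrC => /mulIf.
    by move=> /(_ wj) ->.
  move=> [j ->]; rewrite eqv -dx; apply/eigenvalueP.
  exists (row j P).
    rewrite {1}eqH !mulmxA -row_mul mulmxV // row1 /=.
    have -> : ('e_j : 'rV[R[i]]_k) *m diag_mx d = d 0 j *: 'e_j.
      apply/rowP => i; rewrite mul_mx_diag !mxE.
      by case: (i =P j) => [->|_]; rewrite ?eqxx /= ?mulr1 ?mul1r ?mulr0 ?mul0r.
    by rewrite -scalemxAl -rowE.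
  apply: contraTneq isT => Pj0.
  have : row j (P *m invmx P) = 0 by rewrite row_mul Pj0 mul0mx.
  rewrite mulmxV // row1 => /(congr1 (fun m : 'rV[R[i]]_k => m 0 j)); rewrite !mxE !eqxx /= => /eqP.
  by rewrite oner_eq0.
move=> al be hx y.
set T := (X in X <= 0).
suff : toC T <= toC 0 by rewrite lecR.
rewrite rmorph0.
have toCE : forall A : 'M[R]_1, toC (A 0 0) = (map_mx toC A) 0 0 by move=> A; rewrite mxE.
set yC := map_mx toC y.
have -> : toC T = ((HC *m yC)^T *m (HC *m yC)) 0 0 - toC (al+be) * (yC^T *m HC *m yC) 0 0
   + toC al * toC be * (yC^T *m yC) 0 0.
  by rewrite /T rmorphD rmorphB !rmorphM /= !toCE !map_mxM -!map_trmx !map_mxM.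
set w := P *m yC.
set z := w^t*%sesqui.
have yCr : yC^t*%sesqui = yC^T.
  by apply/matrixP => i j; rewrite !mxE /=; exact: conjc_real.
have zE : yC^T *m invmx P = z.
  by rewrite invmx_unitary // /z /w trmx_mul map_mxM yCr.
have e3 : yC^T *m yC = z *m w.
  by rewrite -zE /w -mulmxA (mulmxA (invmx P)) mulVmx // mul1mx.
have e2 : yC^T *m HC *m yC = z *m diag_mx d *m w.
  by rewrite eqH -zE /w !mulmxA.
have e1 : (HC *m yC)^T *m (HC *m yC) = z *m diag_mx d *m diag_mx d *m w.
  rewrite trmx_mul HCsym !mulmxA eqH -zE /w !mulmxA.
  by rewrite mulmxK.
rewrite e1 e2 e3 (entry_diag (z *m diag_mx d)) entry_diag mxE.
rewrite !mulr_sumr -sumrB -big_split /=; apply: sumr_le0 => j _.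
rewrite mul_mx_diag mxE.
have zj : z 0 j = ((w j 0)^*)%C by rewrite !mxE.
set c := w j 0.
have -> : z 0 j * d 0 j * d 0 j * c - toC (al + be) * (z 0 j * d 0 j * c) + toC al * toC be * (z 0 j * c)
   = (c * (c^*)%C) * toC ((complex.Re (d 0 j) - al) * (complex.Re (d 0 j) - be)).
  rewrite zj {1 2 3}dx !rmorphM !rmorphB !rmorphD /=. ring.
apply: mulr_ge0_le0; first exact: mulcJ_ge0.
rewrite -(rmorph0 toC) lecR.
by case/andP: (hx j) => h1 h2; rewrite mulr_ge0_le0 ?subr_ge0 ?subr_le0.
Qed.

Lemma vnorm2E k (x : 'cV[R]_k) : vnorm2 x = (x^T *m x) 0 0.
Proof. by rewrite /vnorm2 mxE; apply: eq_bigr => j _; rewrite mxE expr2. Qed.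

Lemma vnorm2_ge0 k (x : 'cV[R]_k) : 0 <= vnorm2 x.
Proof. by apply: sumr_ge0 => j _; exact: sqr_ge0. Qed.

Lemma vnorm2_scale k c (x : 'cV[R]_k) : vnorm2 (c *: x) = c^+2 * vnorm2 x.
Proof. by rewrite /vnorm2 mulr_sumr; apply: eq_bigr => j _; rewrite mxE exprMn. Qed.

Lemma vnorm2_comb k (u v : 'cV[R]_k) c :
  vnorm2 (u + c *: v) = vnorm2 u + 2 * c * (u^T *m v) 0 0 + c^+2 * vnorm2 v.
Proof.
rewrite /vnorm2 mxE !mulr_sumr -!big_split /=; apply: eq_bigr => j _.
rewrite !mxE; ring.
Qed.

Lemma vnorm2_gt0 k (x : 'cV[R]_k) : x != 0 -> 0 < vnorm2 x.
Proof.
move=> xn0; rewrite lt_neqAle vnorm2_ge0 andbT.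
apply: contra xn0 => /eqP /esym /psumr_eq0P h.
apply/eqP/matrixP => i j; rewrite (ord1 j) mxE.
by apply/eqP; rewrite -sqrf_eq0; apply/eqP/h => // l _; exact: sqr_ge0.
Qed.

Lemma pd_psd k (H : 'M[R]_k) : pos_def H -> forall y, 0 <= qform H y.
Proof.
move=> [_ Hpd] y; case: (eqVneq y 0) => [->|/Hpd/ltW//].
by rewrite /qform mulmx0 mxE.
Qed.


Section Theta.
Variables (k : nat) (H : 'M[R]_k) (rho : R).
Hypotheses (Hsym : H^T = H) (Hpd : pos_def H) (rho0 : 0 < rho).
Let s := rho^-1.
Let G := s *: H + 1%:M.
Let A := invmx G - 2^-1 *: (1%:M : 'M[R]_k).

Lemma s_gt0 : 0 < s. Proof. by rewrite invr_gt0. Qed.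

Lemma trmx_neq0 m n (v : 'M[R]_(m, n)) : v != 0 -> v^T != 0.
Proof. by apply: contra => /eqP h; rewrite -(trmxK v) h trmx0. Qed.

Lemma G_unit : G \in unitmx.
Proof.
rewrite -row_free_unit -kermx_eq0.
have : ~~ eigenvalue G 0.
  apply/eigenvalueP => -[v vG vn0].
  have : (v *m G *m v^T) 0 0 = 0 by rewrite vG scale0r mul0mx mxE.
  rewrite /G mulmxDr mulmx1 -scalemxAr mulmxDl -scalemxAl.
  have q := Hpd.2 _ (trmx_neq0 vn0).
  have n := vnorm2_gt0 (trmx_neq0 vn0).
  rewrite /qform trmxK in q; rewrite vnorm2E trmxK in n.
  have sq := mulr_gt0 s_gt0 q.
  have : 0 < (s *: (v *m H *m v^T) + v *m v^T) 0 0.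
    by rewrite mxE [(s *: (_ : 'M[R]_1)) 0 0]mxE; exact: addr_gt0.
  by move=> + h; rewrite h ltxx.
rewrite /eigenvalue negbK /eigenspace.
have -> : (0 : R)%:M = 0 :> 'M[R]_k by apply/matrixP => i j; rewrite !mxE mul0rn.
by rewrite subr0.
Qed.

Lemma Gy (y : 'cV[R]_k) : G *m y = y + s *: (H *m y).
Proof. by rewrite /G mulmxDl mul1mx -scalemxAl addrC. Qed.

Lemma AG (y : 'cV[R]_k) : A *m (G *m y) = 2^-1 *: (y + (-s) *: (H *m y)).
Proof.
rewrite /A mulmxBl mulKmx ?G_unit // -scalemxAl mul1mx Gy.
rewrite scalerDr scalerDr !scalerA; apply/matrixP => i j; rewrite !mxE.
by field.
Qed.

Lemma A_unit_decomp x : vnorm2 x = 1 -> exists y : 'cV[R]_k,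
  1 = vnorm2 y + 2 * s * qform H y + s^+2 * vnorm2 (H *m y) /\
  vnorm2 (A *m x) = 4^-1 * (vnorm2 y - 2 * s * qform H y + s^+2 * vnorm2 (H *m y)).
Proof.
move=> x1; exists (invmx G *m x).
set y := invmx G *m x.
have xE : x = G *m y by rewrite /y mulKVmx ?G_unit.
split; first by rewrite -{1}x1 {1}xE Gy vnorm2_comb /qform mulmxA.
rewrite xE AG vnorm2_scale vnorm2_comb /qform mulmxA.
have -> : (2^-1 : R) ^+ 2 = 4^-1 by rewrite exprVn expr2 -natrM.
congr (_ * _); rewrite sqrrN; ring.
Qed.

Lemma A_eig (u : 'cV[R]_k) l : H *m u = l *: u -> 0 < l ->
  A *m u = ((1 - s * l) / (2 * (1 + s * l))) *: u.
Proof.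
move=> Hu l0.
have mu0 : 0 < 1 + s * l by have := mulr_gt0 s_gt0 l0; lra.
have uE : u = G *m ((1 + s * l)^-1 *: u).
  by rewrite Gy -scalemxAr Hu !scalerA -[X in X = _]scale1r -scalerDl; congr (_ *: _); field; rewrite ?(lt0r_neq0 mu0) ?andbT //.
rewrite {1}uE AG -scalemxAr Hu !scalerA -scalerDl scalerA; congr (_ *: _).
field; rewrite ?(lt0r_neq0 mu0) ?andbT //.
Qed.

End Theta.

Lemma unit_eigvec k (H : 'M[R]_k) l : H^T = H -> eigenvalue H l ->
  exists u : 'cV[R]_k, H *m u = l *: u /\ vnorm2 u = 1.
Proof.
move=> Hsym /eigenvalueP [v vH vn0].
set u0 := v^T.
have Hu0 : H *m u0 = l *: u0 by rewrite /u0 -{1}Hsym -trmx_mul vH linearZ.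
have n0 := vnorm2_gt0 (trmx_neq0 vn0).
exists ((Num.sqrt (vnorm2 u0))^-1 *: u0); split.
  by rewrite -scalemxAr Hu0 !scalerA mulrC.
by rewrite vnorm2_scale exprVn sqr_sqrtr ?ltW // mulVf // gt_eqF.
Qed.

Lemma eig_pos k (H : 'M[R]_k) l : pos_def H -> eigenvalue H l -> 0 < l.
Proof.
move=> Hpd el; have [u [Hu u1]] := unit_eigvec Hpd.1 el.
have n00 : vnorm2 (0 : 'cV[R]_k) = 0 by rewrite /vnorm2 big1 // => j _; rewrite mxE expr0n.
have un0 : u != 0.
  by apply/eqP => u0; move: u1; rewrite u0 n00 => /eqP; rewrite eq_sym oner_eq0.
have := Hpd.2 _ un0; rewrite /qform -mulmxA Hu -scalemxAr mxE -vnorm2E u1.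
by rewrite mulr1.
Qed.

Lemma theta_facts k (H : 'M[R]_k) rho : H^T = H -> pos_def H -> 0 < rho ->
  let A := invmx (rho^-1 *: H + 1%:M) - 2^-1 *: (1%:M : 'M[R]_k) in
  (forall l, eigenvalue H l ->
     `|(1 - rho^-1 * l) / (2 * (1 + rho^-1 * l))| <= spec_norm A) /\
  (forall c, 0 <= c -> (forall x, vnorm2 x = 1 -> vnorm2 (A *m x) <= c^+2) ->
     (exists x : 'cV[R]_k, vnorm2 x = 1) -> spec_norm A <= c).
Proof.
move=> Hsym Hpd rho0 A.
have s0 : 0 < rho^-1 by rewrite invr_gt0.
set S := [set Num.sqrt (vnorm2 (A *m x)) | x in [set x : 'cV[R]_k | vnorm2 x = 1]].
have -> : spec_norm A = sup S by [].
split.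
  move=> l el.
  have l0 := eig_pos Hpd el.
  have [u [Hu u1]] := unit_eigvec Hsym el.
  have Su : S (Num.sqrt (vnorm2 (A *m u))) by exists u.
  have ub : ubound S (2^-1).
    move=> z [x /= x1 <-].
    have [y [e1 e2]] := A_unit_decomp Hpd rho0 x1.
    have q0 := pd_psd Hpd y.
    have h : vnorm2 (A *m x) <= 2^-1 ^+ 2.
      have -> : (2^-1 : R) ^+ 2 = 4^-1 by rewrite exprVn expr2 -natrM.
      rewrite e2 -[X in _ <= X]mulr1 ler_wpM2l ?invr_ge0 ?ler0n // [X in _ <= X]e1.
      have gen : forall a b e : R, 0 <= b -> a - b + e <= a + b + e by move=> *; lra.
      by apply: gen; rewrite -mulrA mulr_ge0 // mulr_ge0 // ltW.
    by rewrite -(ger0_norm (_ : 0 <= 2^-1 :> R)) ?invr_ge0 // -sqrtr_sqr ler_sqrt ?sqr_ge0.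
  have hs : has_sup S by split; [exists (Num.sqrt (vnorm2 (A *m u))) | exists 2^-1].
  have := sup_upper_bound hs Su.
  by rewrite (A_eig Hpd rho0 Hu l0) vnorm2_scale u1 mulr1 sqrtr_sqr.
move=> c c0 hc [x0 x01].
apply: ge_sup; first by exists (Num.sqrt (vnorm2 (A *m x0))); exists x0.
move=> z [x /= x1 <-].
by rewrite -(ger0_norm c0) -sqrtr_sqr ler_sqrt ?sqr_ge0 // hc.
Qed.


Lemma ineq_main (a b e t l1 l2 : R) : 0 < t -> 0 < l1 -> 0 < l2 -> 0 <= b ->
  t^+2 * (l1 * l2) = 1 -> e <= (l1 + l2) * b - l1 * l2 * a ->
  1 = a + 2 * t * b + t^+2 * e ->
  4^-1 * (a - 2 * t * b + t^+2 * e) <= ((1 - t * l1) / (2 * (1 + t * l1)))^+2.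
Proof.
move=> t0 l10 l20 b0 tl he hA.
set x := t * l1.
have x0 : 0 < x by rewrite mulr_gt0.
set A' := a + 2 * t * b + t^+2 * e in hA *.
set B' := a - 2 * t * b + t^+2 * e.
have id : (1 - x)^+2 * A' - (1 + x)^+2 * B'
   = 4 * t * (1 - t^+2 * (l1 * l2)) * (b - l1 * a)
     + 4 * t^+3 * l1 * ((l1 + l2) * b - l1 * l2 * a - e).
  by rewrite /x /A' /B'; ring.
have key : B' * (1 + x)^+2 <= (1 - x)^+2 * A'.
  rewrite -subr_ge0 [B' * _]mulrC id tl subrr mulr0 mul0r add0r.
  apply: mulr_ge0; last by rewrite subr_ge0.
  by rewrite !mulr_ge0 ?exprn_ge0 ?ltW.
have d0 : 0 < 4 * (1 + x)^+2 by rewrite mulr_gt0 ?exprn_gt0 //; lra.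
have -> : 4^-1 * B' = (B' * (1 + x)^+2) / (4 * (1 + x)^+2).
  by field; rewrite lt0r_neq0 //; lra.
have -> : ((1 - x) / (2 * (1 + x)))^+2 = ((1 - x)^+2 * A') / (4 * (1 + x)^+2).
  by rewrite -hA mulr1 expr_div_n exprMn; congr (_ / (_ * _)); rewrite expr2 -natrM.
by rewrite ler_wpM2r // invr_ge0 ltW.
Qed.

Lemma ineq_cmp (t s l1 l2 : R) : 0 < t -> 0 < s -> 0 < l1 -> l1 <= l2 ->
  t^+2 * (l1 * l2) = 1 ->
  (1 - t * l1) / (2 * (1 + t * l1)) <= `|(1 - s * l1) / (2 * (1 + s * l1))| \/
  (1 - t * l1) / (2 * (1 + t * l1)) <= `|(1 - s * l2) / (2 * (1 + s * l2))|.
Proof.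
move=> t0 s0 l10 l12 tl.
have l20 : 0 < l2 by apply: lt_le_trans l12.
have p1 : 0 < 1 + t * l1 by have := mulr_gt0 t0 l10; lra.
have p2 : 0 < 1 + s * l1 by have := mulr_gt0 s0 l10; lra.
have p3 : 0 < 1 + s * l2 by have := mulr_gt0 s0 l20; lra.
case: (lerP s t) => hst.
  left; apply: le_trans (ler_norm _).
  rewrite -subr_ge0.
  have -> : (1 - s * l1) / (2 * (1 + s * l1)) - (1 - t * l1) / (2 * (1 + t * l1))
     = (l1 * (t - s)) / ((1 + s * l1) * (1 + t * l1)).
    by field; apply/andP; split; rewrite lt0r_neq0.
  by rewrite divr_ge0 ?mulr_ge0 ?subr_ge0 // ltW.
right; rewrite ler_normr; apply/orP; right.
rewrite -subr_ge0.
have -> : - ((1 - s * l2) / (2 * (1 + s * l2))) - (1 - t * l1) / (2 * (1 + t * l1))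
     = (s * t * (l1 * l2) - 1) / ((1 + s * l2) * (1 + t * l1)).
  by field; apply/andP; split; rewrite lt0r_neq0.
apply: divr_ge0; last by rewrite mulr_ge0 // ltW.
rewrite subr_ge0 -tl; apply: ler_wpM2r; first by rewrite mulr_ge0 // ltW.
by rewrite expr2; apply: ler_wpM2r; apply: ltW.
Qed.


Lemma block k n (Q : 'M[R]_n) (Z : 'M[R]_(n, k)) :
  Z^T *m Z = 1%:M -> (0 < k)%N -> pos_def (Z^T *m Q *m Z) ->
  0 < rho_star Q Z /\ forall rho, 0 < rho -> Theta Q Z (rho_star Q Z) <= Theta Q Z rho.
Proof.
move=> ZZ k0 Hpd.
set H := Z^T *m Q *m Z in Hpd *.
have Hsym : H^T = H := Hpd.1.
have ThE : forall rho, Theta Q Z rho =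
    spec_norm (invmx (rho^-1 *: H + 1%:M) - 2^-1 *: (1%:M : 'M[R]_k)).
  by move=> rho; rewrite /Theta mulmxDr mulmxDl mulmx1 ZZ -scalemxAr -scalemxAl.
have [x [eigx quadx]] := spectral_real Hsym.
pose i0 : 'I_k := Ordinal k0.
case: (@arg_minP _ _ _ i0 xpredT x isT) => j1 _ hj1.
case: (@arg_maxP _ _ _ i0 xpredT x isT) => j2 _ hj2.
have e1 : eigenvalue H (x j1) by apply/eigx; exists j1.
have e2 : eigenvalue H (x j2) by apply/eigx; exists j2.
have lb : forall a, eigenvalue H a -> x j1 <= a by move=> a /eigx [j ->]; exact: hj1.
have ub : forall a, eigenvalue H a -> a <= x j2 by move=> a /eigx [j ->]; exact: hj2.
have l1p := eig_pos Hpd e1.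
have l2p := eig_pos Hpd e2.
have l12 : x j1 <= x j2 := ub _ e1.
have emin : eig_min H = x j1.
  have hl : has_lbound [set a : R | eigenvalue H a] by exists (x j1) => a ha; exact: lb.
  rewrite /eig_min; apply/le_anti/andP; split; first exact: (ge_inf hl e1).
  by apply: lb_le_inf; [exists (x j1) | move=> a ha; exact: lb].
have emax : eig_max H = x j2.
  have hs : has_sup [set a : R | eigenvalue H a].
    by split; [exists (x j2) | exists (x j2) => a ha; exact: ub].
  rewrite /eig_max; apply/le_anti/andP; split; last exact: (sup_upper_bound hs e2).
  by apply: ge_sup; [exists (x j2) | move=> a ha; exact: ub].
have rsE : rho_star Q Z = Num.sqrt (x j1 * x j2) by rewrite /rho_star -/H emin emax.
set l1 := x j1 in l1p l12 lb e1 rsE *.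
set l2 := x j2 in l2p l12 ub e2 rsE *.
set r := Num.sqrt (l1 * l2) in rsE *.
have r0 : 0 < r by rewrite sqrtr_gt0 mulr_gt0.
have r2 : r ^+ 2 = l1 * l2 by rewrite sqr_sqrtr // mulr_ge0 // ltW.
split; first by rewrite rsE.
move=> rho rho0; rewrite rsE !ThE.
have [lbr _] := theta_facts Hsym Hpd rho0.
have [_ ubr] := theta_facts Hsym Hpd r0.
set t := r^-1 in ubr.
have t0 : 0 < t by rewrite invr_gt0.
have tl : t^+2 * (l1 * l2) = 1 by rewrite -r2 exprVn mulVf // expf_neq0 // lt0r_neq0.
set c := (1 - t * l1) / (2 * (1 + t * l1)).
have c0 : 0 <= c.
  have tl1 : t * l1 <= 1.
    have h1 : t * l1 <= t * l2 by rewrite ler_pM2l.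
    have h2 : (t * l1) * (t * l2) = 1 by rewrite -tl; ring.
    have h3 := mulr_gt0 t0 l1p.
    nra.
  by rewrite divr_ge0 ?subr_ge0 // mulr_ge0 //; have := mulr_gt0 t0 l1p; lra.
apply: le_trans (ubr c c0 _ _) _.
- move=> v v1.
  have [y [ea eb]] := A_unit_decomp Hpd r0 v1.
  rewrite eb; apply: (ineq_main t0 l1p l2p _ tl _ ea); first exact: pd_psd.
  have bnd : forall j, l1 <= x j <= l2.
    by move=> j; apply/andP; split; [exact: hj1 | exact: hj2].
  have h := quadx l1 l2 bnd y; rewrite -!vnorm2E in h.
  have gen : forall E B A' : R, E - (l1 + l2) * B + l1 * l2 * A' <= 0 ->
      E <= (l1 + l2) * B - l1 * l2 * A' by move=> E B A' hh; lra.
  exact: gen.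
- by have [u [_ u1]] := unit_eigvec Hsym e1; exists u.
- have s0 : 0 < rho^-1 by rewrite invr_gt0.
  have [h|h] := ineq_cmp t0 s0 l1p l12 tl.
  + exact: le_trans h (lbr _ e1).
  + exact: le_trans h (lbr _ e2).
Qed.

End S.

Unset Implicit Arguments.
Local Close Scope classical_set_scope.

Theorem proposition2 (R : realType) (M : nat) (n p k : 'I_M -> nat)
  (Q : forall i, 'M[R]_(n i)) (C : forall i, 'M[R]_(p i, n i))
  (Z : forall i, 'M[R]_(n i, k i)) (beta : R) :
  (forall i, sym_psd (Q i)) ->
  (forall i, full_row_rank (C i)) ->
  (forall i, orth_null_basis (C i) (Z i)) ->
  (forall i, (0 < k i)%N) ->
  (forall i, pos_def ((Z i)^T *m Q i *m Z i)) ->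
  0 < beta < 1 ->
  (forall i, 0 < rho_star (Q i) (Z i)) /\
  (forall rho : 'I_M -> R, (forall i, 0 < rho i) ->
     Mtilde_norm Q Z (fun i => rho_star (Q i) (Z i)) <= Mtilde_norm Q Z rho).
Proof.
move=> _ _ hZ hk hpd _.
have B : forall i, 0 < rho_star (Q i) (Z i) /\ forall rho, 0 < rho ->
    Theta (Q i) (Z i) (rho_star (Q i) (Z i)) <= Theta (Q i) (Z i) rho.
  by move=> i; case: (hZ i) => ZZ _ _; apply: block.
split; first by move=> i; exact: (B i).1.
move=> rho rpos; rewrite /Mtilde_norm; apply: le_bigmax2 => i _.
exact: (B i).2.
Qed.
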